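(* Fix an archive level $K\ge 0$ and consider the period equilibria of the two environments $e\in\{\mathrm{HO},\mathrm{AI}\}$ at $K$, with posted flows $q_L^e(K),q_H^e(K)$ satisfying $Q^e(K)=\pi q_L^e(K)+(1-\pi)q_H^e(K)>0$ and $q_L^e(K)>0$. Then the expected knowledge increment satisfies $$\bar\Delta^e(K)=\Delta\cdot\frac{(1-\pi)\,q_H^{e}(K)}{\pi\,q_L^{e}(K)+(1-\pi)\,q_H^{e}(K)},$$ which is increasing in the ratio $q_H^e(K)/q_L^e(K)$. Therefore $c^{*,\mathrm{AI}}(K)\ge c^{*,\mathrm{HO}}(K)$ if and only if $$\frac{q_H^{\mathrm{AI}}(K)}{q_L^{\mathrm{AI}}(K)}\ge \frac{q_H^{\mathrm{HO}}(K)}{q_L^{\mathrm{HO}}(K)}.$$ Moreover, holding escalation probabilities fixed across environments ($m_\theta^{\mathrm{AI}}(K)=m_\theta^{\mathrm{HO}}(K)$ for both $\theta\in\{L,H\}$), a sufficient condition for the posted pool to be more $H$-rich under AI (i.e. for the displayed ratio inequality to hold) is $$\frac{1-a_H^{\mathrm{AI}}(K)}{1-a_H^{\mathrm{HO}}(K)}>\frac{1-a_L^{\mathrm{AI}}(K)}{1-a_L^{\mathrm{HO}}(K)}.$$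
   Context: Model: routine-task share $\pi\in(0,1)$; query types $\theta\in\{L,H\}$ (routine and knowledge-enhancing); environments $e\in\{\mathrm{HO},\mathrm{AI}\}$ (human-only and AI). Parameters $\Delta>0$ (knowledge increment from a resolved type-$H$ query), $\beta\ge 0$, $u\ge 0$. For each $e$ and $K$: private-resolution probabilities $a_\theta^e(K)\in[0,1)$; a posting-cost CDF $\Gamma_\theta$ on $[0,\infty)$; private values $V_\theta>0$; an answering-cost CDF $F$ on $[0,\bar c]$; a cost shifter $C(K)$. In a period equilibrium at $(K,e)$ the following hold: match probability $\mu^e=\min\{1,\Psi(\alpha^{*,e})/Q^e\}$ where $\Psi(\alpha^{*,e})$ is the mass of participating contributors; expected increment $\bar\Delta^e=(1-\pi)q_H^e\Delta/Q^e$; answering cutoff $c^{*,e}(K)=\max\{0,\beta\bar\Delta^e(K)+u-C(K)\}$; resolution probability $\sigma^e=\mu^eF(c^{*,e})$; escalation probabilities $m_\theta^e=\Gamma_\theta(\sigma^eV_\theta)$; posted flows $q_\theta^e(K)=m_\theta^e(K)[1-a_\theta^e(K)]$ and total flow $Q^e=\pi q_L^e+(1-\pi)q_H^e$. *)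

(* Defs.v *)
From Stdlib Require Import Reals Lra.
Open Scope R_scope.

Inductive env := HO | AI.
Inductive qtype := L | H.

Definition cdf_on_nonneg (G : R -> R) : Prop :=
  (forall x y, x <= y -> G x <= G y) /\
  (forall x, 0 <= G x <= 1) /\
  (forall x, x < 0 -> G x = 0).

Definition cdf_on_interval (cbar : R) (G : R -> R) : Prop :=
  cdf_on_nonneg G /\ (forall x, cbar <= x -> G x = 1).

Definition total_flow (pi : R) (q : qtype -> R) : R :=
  pi * q L + (1 - pi) * q H.

Definition dbar_of_ratio (pi Delta r : R) : R :=
  Delta * ((1 - pi) * r) / (pi + (1 - pi) * r).

(* Primitives at (K,e): a (private-resolution probs), Gam (posting-cost CDFs),
   V (private values), F (answering-cost CDF), CK = C(K), Psi = Psi(alpha^{*,e})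
   (mass of participating contributors). *)
Definition period_equilibrium (pi Delta beta u : R)
    (a : qtype -> R) (Gam : qtype -> R -> R) (V : qtype -> R) (F : R -> R)
    (CK Psi : R)
    (mu Dbar cstar sigma : R) (m q : qtype -> R) : Prop :=
  let Q := total_flow pi q in
  mu = Rmin 1 (Psi / Q) /\
  Dbar = (1 - pi) * q H * Delta / Q /\
  cstar = Rmax 0 (beta * Dbar + u - CK) /\
  sigma = mu * F cstar /\
  (forall th, m th = Gam th (sigma * V th)) /\
  (forall th, q th = m th * (1 - a th)).

(* Main.v *)
Require Import Defs.
From Stdlib Require Import Reals.
Open Scope R_scope.

From Stdlib Require Import Lra Psatz.

Lemma dbar_diff pi Delta r1 r2 : 0 < pi < 1 -> 0 <= r1 -> 0 <= r2 ->
  dbar_of_ratio pi Delta r2 - dbar_of_ratio pi Delta r1 =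
  Delta * (1 - pi) * pi * (r2 - r1) / ((pi + (1 - pi) * r1) * (pi + (1 - pi) * r2)).
Proof.
  intros hp h1 h2. unfold dbar_of_ratio.
  assert (0 < pi + (1 - pi) * r1) by nra.
  assert (0 < pi + (1 - pi) * r2) by nra.
  field. lra.
Qed.

Lemma dbar_le pi Delta r1 r2 : 0 < pi < 1 -> 0 < Delta -> 0 <= r1 -> r1 <= r2 ->
  dbar_of_ratio pi Delta r1 <= dbar_of_ratio pi Delta r2.
Proof.
  intros hp hD h1 h12.
  assert (h2 : 0 <= r2) by lra.
  pose proof (dbar_diff pi Delta r1 r2 hp h1 h2) as E.
  assert (0 < pi + (1 - pi) * r1) by nra.
  assert (0 < pi + (1 - pi) * r2) by nra.
  assert (0 <= Delta * (1 - pi) * pi * (r2 - r1) / ((pi + (1 - pi) * r1) * (pi + (1 - pi) * r2))).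
  { unfold Rdiv. apply Rmult_le_pos.
    - assert (0 <= Delta * (1 - pi)) by nra. assert (0 <= Delta * (1 - pi) * pi) by nra. nra.
    - left. apply Rinv_0_lt_compat. nra. }
  lra.
Qed.

Lemma dbar_lt pi Delta r1 r2 : 0 < pi < 1 -> 0 < Delta -> 0 <= r1 -> r1 < r2 ->
  dbar_of_ratio pi Delta r1 < dbar_of_ratio pi Delta r2.
Proof.
  intros hp hD h1 h12.
  assert (h2 : 0 <= r2) by lra.
  pose proof (dbar_diff pi Delta r1 r2 hp h1 h2) as E.
  assert (0 < pi + (1 - pi) * r1) by nra.
  assert (0 < pi + (1 - pi) * r2) by nra.
  assert (0 < Delta * (1 - pi) * pi * (r2 - r1) / ((pi + (1 - pi) * r1) * (pi + (1 - pi) * r2))).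
  { unfold Rdiv. apply Rmult_lt_0_compat.
    - assert (0 < Delta * (1 - pi)) by nra. assert (0 < Delta * (1 - pi) * pi) by nra. nra.
    - apply Rinv_0_lt_compat. nra. }
  lra.
Qed.

Theorem lemma1
  (pi Delta beta u : R)
  (hpi : 0 < pi < 1) (hDelta : 0 < Delta) (hbeta : 0 <= beta) (hu : 0 <= u)
  (a : env -> qtype -> R -> R)
  (Gam : env -> qtype -> R -> R) (V : env -> qtype -> R)
  (F : env -> R -> R) (cbar : env -> R) (C : R -> R) (Psi : env -> R)
  (ha : forall e th K, 0 <= a e th K < 1)
  (hGam : forall e th, cdf_on_nonneg (Gam e th))
  (hV : forall e th, 0 < V e th)
  (hcbar : forall e, 0 <= cbar e)
  (hF : forall e, cdf_on_interval (cbar e) (F e))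
  (hPsi : forall e, 0 <= Psi e)
  (K : R) (hK : 0 <= K)
  (mu Dbar cstar sigma : env -> R) (m q : env -> qtype -> R)
  (heq : forall e, period_equilibrium pi Delta beta u
                     (fun th => a e th K) (Gam e) (V e) (F e) (C K) (Psi e)
                     (mu e) (Dbar e) (cstar e) (sigma e) (m e) (q e))
  (hQ : forall e, 0 < total_flow pi (q e))
  (hqL : forall e, 0 < q e L) :
  (* closed form of the expected increment *)
  (forall e, Dbar e = Delta * ((1 - pi) * q e H) / (pi * q e L + (1 - pi) * q e H))
  (* it is a function of the ratio q_H/q_L ... *)
  /\ (forall e, Dbar e = dbar_of_ratio pi Delta (q e H / q e L))
  (* ... which is (strictly) increasing in that ratio *)
  /\ (forall r1 r2, 0 <= r1 -> r1 < r2 -> dbar_of_ratio pi Delta r1 < dbar_of_ratio pi Delta r2)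
  (* ratio comparison implies cutoff comparison *)
  /\ (q AI H / q AI L >= q HO H / q HO L -> cstar AI >= cstar HO)
  (* converse, in the non-degenerate case beta > 0 and interior HO cutoff *)
  /\ (0 < beta -> 0 < cstar HO ->
        cstar AI >= cstar HO -> q AI H / q AI L >= q HO H / q HO L)
  (* sufficient condition with escalation probabilities held fixed *)
  /\ ((forall th, m AI th = m HO th) ->
        (1 - a AI H K) / (1 - a HO H K) > (1 - a AI L K) / (1 - a HO L K) ->
        q AI H / q AI L >= q HO H / q HO L).
Proof.
  assert (HD : forall e, Dbar e = Delta * ((1 - pi) * q e H) / (pi * q e L + (1 - pi) * q e H)).
  { intro e. destruct (heq e) as (_ & hd & _). rewrite hd.
    pose proof (hQ e) as hq. unfold total_flow in *. field. lra. }
  assert (HR : forall e, Dbar e = dbar_of_ratio pi Delta (q e H / q e L)).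
  { intro e. rewrite HD. unfold dbar_of_ratio.
    pose proof (hQ e) as hq. pose proof (hqL e) as hqLe. unfold total_flow in *.
    assert (hden : pi + (1 - pi) * (q e H / q e L) <> 0).
    { replace (pi + (1 - pi) * (q e H / q e L)) with ((pi * q e L + (1 - pi) * q e H) / q e L)
        by (field; lra).
      unfold Rdiv. apply Rmult_integral_contrapositive_currified. lra.
      apply Rinv_neq_0_compat. lra. }
    field; split; assumption || lra. }
  assert (HqH : forall e, 0 <= q e H).
  { intro e. destruct (heq e) as (_ & _ & _ & _ & hm & hqq).
    rewrite hqq, hm. destruct (hGam e H) as (_ & hb & _). specialize (hb (sigma e * V e H)).
    specialize (ha e H K). nra. }
  assert (Hr : forall e, 0 <= q e H / q e L).
  { intro e. unfold Rdiv. apply Rmult_le_pos. apply HqH. left. apply Rinv_0_lt_compat. apply hqL. }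
  assert (HC : forall e, cstar e = Rmax 0 (beta * Dbar e + u - C K)).
  { intro e. destruct (heq e) as (_ & _ & hc & _). exact hc. }
  split; [exact HD|]. split; [exact HR|].
  split. { intros. apply dbar_lt; auto. }
  split.
  { intro hr. rewrite !HC. apply Rle_ge.
    assert (hDD : Dbar HO <= Dbar AI).
    { rewrite !HR. apply dbar_le; auto. lra. }
    apply Rle_max_compat_l. nra. }
  split.
  { intros hb hc hge.
    destruct (Rlt_or_le (q AI H / q AI L) (q HO H / q HO L)) as [hl|hl]; [|lra].
    exfalso.
    assert (hDD : Dbar AI < Dbar HO). { rewrite !HR. apply dbar_lt; auto. }
    rewrite HC in hc. rewrite !HC in hge.
    unfold Rmax in *.
    destruct (Rle_dec 0 (beta * Dbar HO + u - C K)); [|lra].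
    destruct (Rle_dec 0 (beta * Dbar AI + u - C K)); nra. }
  intros hm hgt.
  assert (hq : forall e th, q e th = m e th * (1 - a e th K)).
  { intros e th. destruct (heq e) as (_ & _ & _ & _ & _ & hqq). apply hqq. }
  rewrite !hq. rewrite !hm.
  pose proof (hqL AI) as hL. rewrite hq, hm in hL.
  pose proof (ha AI H K) as a1. pose proof (ha AI L K) as a2. pose proof (ha HO H K) as a3. pose proof (ha HO L K) as a4.
  assert (hmL : 0 < m HO L) by nra.
  assert (hmH : 0 <= m HO H).
  { pose proof (HqH HO) as h. rewrite hq in h. nra. }
  set (xH := 1 - a AI H K) in *. set (yH := 1 - a HO H K) in *.
  set (xL := 1 - a AI L K) in *. set (yL := 1 - a HO L K) in *.
  assert (p0 : 0 < xH) by (unfold xH; lra). assert (p1 : 0 < yH) by (unfold yH; lra).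
  assert (p2 : 0 < xL) by (unfold xL; lra). assert (p3 : 0 < yL) by (unfold yL; lra).
  assert (hk : xL * yH <= xH * yL).
  { apply Rgt_lt in hgt.
    apply (Rmult_lt_compat_r (yH * yL)) in hgt; [|nra].
    replace (xL / yL * (yH * yL)) with (xL * yH) in hgt by (field; lra).
    replace (xH / yH * (yH * yL)) with (xH * yL) in hgt by (field; lra). lra. }
  apply Rle_ge.
  replace (m HO H * xH / (m HO L * xL)) with ((m HO H / m HO L) * (xH / xL)) by (field; lra).
  replace (m HO H * yH / (m HO L * yL)) with ((m HO H / m HO L) * (yH / yL)) by (field; lra).
  apply Rmult_le_compat_l.
  { unfold Rdiv. apply Rmult_le_pos; auto. left. apply Rinv_0_lt_compat. auto. }
  apply (Rmult_le_reg_r (xL * yL)). nra.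
  replace (yH / yL * (xL * yL)) with (xL * yH) by (field; lra).
  replace (xH / xL * (xL * yL)) with (xH * yL) by (field; lra). lra.
Qed.
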